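(* Let $\{\gamma_\Lambda\}_{\Lambda\in\mathcal{S}}$ be a specification on $(\Omega,\mathcal{F})$. Then for each $\Lambda\in\mathcal{S}$, $\Gamma\in\mathcal{S}(\Lambda^c)$ and bounded measurable functions $f,g$ on $\Omega$, $$\gamma_{\Lambda\cup\Gamma}\bigl[f\,\gamma_\Lambda(\gamma_\Gamma(g))\bigr]=\gamma_{\Lambda\cup\Gamma}\bigl[g\,\gamma_\Gamma(\gamma_\Lambda(f))\bigr].$$
   Context: $(E,\mathcal{E})$ is a measurable space, $\Omega=E^{\mathbb{Z}^d}$ with product $\sigma$-algebra $\mathcal{F}$; for $U\subset\mathbb{Z}^d$, $\mathcal{F}_U$ is the $\sigma$-algebra generated by the coordinates in $U$, $U^c$ the complement, $\mathcal{S}(U)$ the finite subsets of $U$, $\mathcal{S}=\mathcal{S}(\mathbb{Z}^d)$. For a kernel $\gamma$ and bounded measurable $f$, $\gamma(f)(\omega)=\int f(\eta)\gamma(d\eta\mid\omega)$; $(\gamma\tilde\gamma)(f)=\gamma(\tilde\gamma(f))$. A specification is a family of probability kernels $\{\gamma_\Lambda\}_{\Lambda\in\mathcal{S}}$ such that for all $\Lambda\in\mathcal{S}$: $\gamma_\Lambda(A\mid\cdot)$ is $\mathcal{F}_{\Lambda^c}$-measurable for $A\in\mathcal{F}$; $\gamma_\Lambda(B\mid\omega)=\mathbf 1_B(\omega)$ for $B\in\mathcal{F}_{\Lambda^c}$; $\gamma_\Delta\gamma_\Lambda=\gamma_\Delta$ for all $\Delta\in\mathcal{S}$ with $\Delta\supset\Lambda$.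 *)

(* Defs.v *)
From HB Require Import structures.
From mathcomp Require Import all_boot all_order all_algebra.
From mathcomp Require Import all_classical all_reals all_analysis measurable_realfun.
Unset Printing Implicit Defensive.
Import Order.TTheory GRing.Theory Num.Theory.
Local Open Scope classical_set_scope.
Local Open Scope ring_scope.

Definition Zd (d : nat) : Type := 'rV[int]_d.

Definition coord_sets {d : nat} {dE : measure_display} (E : measurableType dE)
    (U : set (Zd d)) : set (set (Zd d -> E)) :=
  \bigcup_(i in U) preimage_set_system setT (fun w : Zd d -> E => w i) measurable.

Definition sigmaF {d : nat} {dE : measure_display} (E : measurableType dE)
    (U : set (Zd d)) : set (set (Zd d -> E)) :=
  <<s coord_sets E U >>.

(* Omega = E^{Z^d} with the product sigma-algebra F = F_{Z^d}. *)
Definition Omega (d : nat) {dE : measure_display} (E : measurableType dE) :=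
  g_sigma_algebraType (coord_sets E [set: Zd d]).

Definition F_measurable {d : nat} {dE : measure_display} (E : measurableType dE)
    {R : realType} (U : set (Zd d)) (h : (Zd d -> E) -> \bar R) : Prop :=
  forall B : set (\bar R), measurable B -> sigmaF E U (h @^-1` B).

Definition kapp {d : nat} {dE : measure_display} {E : measurableType dE}
    {R : realType} (gamma : Omega d E -> probability (Omega d E) R)
    (f : Omega d E -> R) : Omega d E -> R :=
  fun w => Rintegral (gamma w) setT f.

(* A specification: a family of probability kernels indexed by the finite
   subsets of Z^d (values at infinite sets are irrelevant). *)
Definition specification {d : nat} {dE : measure_display} {E : measurableType dE}
    {R : realType} (gamma : set (Zd d) -> Omega d E -> probability (Omega d E) R)
    : Prop :=
  forall Lam : set (Zd d), finite_set Lam ->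
    (forall A : set (Omega d E), measurable A ->
       F_measurable E (~` Lam) (fun w => gamma Lam w A))
 /\ (forall B : set (Omega d E), sigmaF E (~` Lam) B ->
       forall w, gamma Lam w B = (\1_B w)%:E)
 /\ (forall Delta : set (Zd d), finite_set Delta -> Lam `<=` Delta ->
       forall (A : set (Omega d E)), measurable A -> forall w,
         (\int[gamma Delta w]_eta gamma Lam eta A = gamma Delta w A)%E).

(* Main.v *)
Require Import Defs.
From HB Require Import structures.
From mathcomp Require Import all_boot all_order all_algebra.
From mathcomp Require Import all_classical all_reals all_analysis measurable_realfun.
Import Order.TTheory GRing.Theory Num.Theory.
Local Open Scope classical_set_scope.
Local Open Scope ring_scope.

Lemma pT d (T : measurableType d) (R : realType) (P : probability T R) :
  P setT = 1%E.
Proof. by have := probability_setT P; move=> /= ->. Qed.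

Lemma pTlt d (T : measurableType d) (R : realType) (P : probability T R) :
  (P setT < +oo)%E.
Proof. by have := probability_setT P; move=> /= ->; rewrite ltry. Qed.

Lemma pTf d (T : measurableType d) (R : realType) (P : probability T R) :
  fine (P setT) = 1.
Proof. by have := probability_setT P; move=> /= ->. Qed.

Lemma bnd_int d (T : measurableType d) (R : realType) (P : probability T R)
  (f : T -> R) : measurable_fun setT f -> (exists M : R, forall x, `|f x| <= M) ->
  P.-integrable setT (EFin \o f).
Proof.
move=> mf [M hM]; apply: measurable_bounded_integrable => //.
  exact: pTlt.
exists M; split; first by rewrite num_real.
move=> y My x _; exact: le_trans (hM x) (ltW My).
Qed.

Lemma bnd_kapp d (T : measurableType d) (R : realType) (P : probability T R)
  (f : T -> R) M : measurable_fun setT f -> (forall x, `|f x| <= M) ->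
  `|Rintegral P setT f| <= M.
Proof.
move=> mf hM.
have iF : P.-integrable setT (EFin \o f) by apply: bnd_int => //; exists M.
apply: le_trans (le_normr_Rintegral _ iF) _ => //.
have -> : M = Rintegral P setT (fun _ => M).
  by rewrite Rintegral_cst // pTf /= mulr1.
apply: le_Rintegral => //.
- apply: bnd_int; first exact: measurableT_comp.
  by exists M => x; rewrite normr_id.
- apply: bnd_int => //; exists `|M| => x //.
Qed.

Lemma kapp_shift d (T : measurableType d) (R : realType) (P : probability T R)
  (f : T -> R) c : measurable_fun setT f -> (exists M : R, forall x, `|f x| <= M) ->
  Rintegral P setT (fun x => f x + c) = Rintegral P setT f + c.
Proof.
move=> mf bf; rewrite RintegralD //; first by rewrite Rintegral_cst // pTf /= mulr1.
  exact: bnd_int.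
by apply: bnd_int => //; exists `|c|.
Qed.

Lemma meas_kapp d d' (X : measurableType d) (T : measurableType d') (R : realType)
  (l : X -> probability T R)
  (ml : forall U, measurable U -> measurable_fun setT (fun x => l x U))
  (f : T -> R) : measurable_fun setT f -> (exists M : R, forall x, `|f x| <= M) ->
  measurable_fun setT (fun x => Rintegral (l x) setT f).
Proof.
move=> mf [M hM].
have mfM : measurable_fun setT (fun x => f x + M) by apply: measurable_funD.
have bfM : exists M0 : R, forall x, `|f x + M| <= M0.
  by exists (M + `|M|) => x; rewrite (le_trans (ler_normD _ _)) // lerD.
have -> : (fun x => Rintegral (l x) setT f) =
          (fun x => Rintegral (l x) setT (fun y => f y + M) - M).
  apply/funext => x; rewrite kapp_shift //; [by rewrite addrK | by exists M].
apply: measurable_funB => //.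
apply: measurableT_comp; first exact: fine_measurable.
apply: measurable_fun_integral_kernel => //.
- move=> y; rewrite lee_fin -lerBlDr sub0r.
  by rewrite lerNl (le_trans _ (hM y)) // -normrN ler_norm.
- exact/measurable_EFinP.
Qed.
Import HBNNSimple.

Lemma integral_mix_nnsfun d d' (X : measurableType d) (Y : measurableType d')
  (R : realType) (mu : {measure set X -> \bar R}) (nu : {measure set Y -> \bar R})
  (l : X -> {measure set Y -> \bar R})
  (ml : forall U, measurable U -> measurable_fun setT (fun x => l x U))
  (H : forall A, measurable A -> (\int[mu]_x l x A = nu A)%E)
  (f : {nnsfun Y >-> R}) :
  (\int[nu]_z (f z)%:E = \int[mu]_y (\int[l y]_z (f z)%:E))%E.
Proof.
have ind : forall E, measurable E ->
    (\int[nu]_z (\1_E z)%:E = \int[mu]_y (\int[l y]_z (\1_E z)%:E))%E.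
  move=> E mE; rewrite integral_indic// setIT -H//.
  by apply: eq_integral => y _; rewrite integral_indic// setIT.
under [in LHS]eq_integral do rewrite fimfunE -fsumEFin//.
rewrite ge0_integral_fsum//; last 2 first.
  - by move=> r; exact/measurable_EFinP/measurableT_comp.
  - by move=> r z _; rewrite EFinM nnfun_muleindic_ge0.
under [in RHS]eq_integral.
  move=> y _.
  under eq_integral.
    by move=> z _; rewrite fimfunE -fsumEFin//; over.
  rewrite /= ge0_integral_fsum//; last 2 first.
    - by move=> r; exact/measurable_EFinP/measurableT_comp.
    - by move=> r z _; rewrite EFinM nnfun_muleindic_ge0.
  under eq_fsbigr.
    move=> r _.
    rewrite (integralZl_indic _ (fun r => f @^-1` [set r]))//; last first.
      by move=> r0; rewrite preimage_nnfun0.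
    rewrite integral_indic// setIT.
    over.
  over.
rewrite /= ge0_integral_fsum//; last 2 first.
  - move=> r; apply: measurable_funeM.
    exact: ml.
  - move=> n y _.
    have := mulemu_ge0 (fun n => f @^-1` [set n]).
    by apply; exact: preimage_nnfun0.
apply: eq_fsbigr => r _.
rewrite (integralZl_indic _ (fun r => f @^-1` [set r]))//; last first.
  exact: preimage_nnfun0.
rewrite /= ind//.
have [r0|r0] := leP 0%R r.
  rewrite ge0_integralZl//.
    by under eq_integral do rewrite integral_indic// setIT.
  exact: ml.
rewrite integral0_eq ?mule0.
  by rewrite integral0_eq// => y _; rewrite preimage_nnfun0// measure0 mule0.
by move=> y _; rewrite integral0_eq// => z _; rewrite preimage_nnfun0// indic0.
Qed.

Lemma integral_mix d d' (X : measurableType d) (Y : measurableType d')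
  (R : realType) (mu : {measure set X -> \bar R}) (nu : {measure set Y -> \bar R})
  (l : X -> {measure set Y -> \bar R})
  (ml : forall U, measurable U -> measurable_fun setT (fun x => l x U))
  (H : forall A, measurable A -> (\int[mu]_x l x A = nu A)%E)
  (f : Y -> \bar R) : (forall z, 0 <= f z)%E -> measurable_fun setT f ->
  (\int[nu]_z f z = \int[mu]_y (\int[l y]_z f z))%E.
Proof.
move=> f0 mf.
pose f_ := nnsfun_approx measurableT mf.
transitivity (\int[nu]_z (lim ((f_ n z)%:E @[n --> \oo])))%E.
  by apply/eq_integral => z _; apply/esym/cvg_lim => //=; exact: cvg_nnsfun_approx.
rewrite monotone_convergence//; last 3 first.
  by move=> n; exact/measurable_EFinP.
  by move=> n z _; rewrite lee_fin.
  by move=> z _ a b ab; rewrite lee_fin; exact/lefP/nd_nnsfun_approx.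
rewrite (_ : (fun _ => _) =
    (fun n => \int[mu]_y (\int[l y]_z (f_ n z)%:E)))%E//; last first.
  by apply/funext => n; rewrite (@integral_mix_nnsfun _ _ _ _ _ _ _ _ ml H).
transitivity (\int[mu]_y lim ((\int[l y]_z (f_ n z)%:E) @[n --> \oo]))%E.
  rewrite -monotone_convergence//; last 3 first.
  - move=> n; apply: measurable_fun_integral_kernel => //.
    + by move=> z; rewrite lee_fin.
    + exact/measurable_EFinP.
  - by move=> n y _; apply: integral_ge0 => // z _; rewrite lee_fin.
  - move=> y _ a b ab; apply: ge0_le_integral => //.
    + by move=> z _; rewrite lee_fin.
    + exact/measurable_EFinP.
    + exact/measurable_EFinP.
    + by move=> z _; rewrite lee_fin; exact/lefP/nd_nnsfun_approx.
apply: eq_integral => y _; rewrite -monotone_convergence//; last 3 first.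
  - by move=> n; exact/measurable_EFinP.
  - by move=> n z _; rewrite lee_fin.
  - by move=> z _ a b ab; rewrite lee_fin; exact/lefP/nd_nnsfun_approx.
by apply: eq_integral => z _; apply/cvg_lim => //; exact: cvg_nnsfun_approx.
Qed.

Definition Osub (d : nat) {dE : measure_display} (E : measurableType dE)
  (U : set (Zd d)) := g_sigma_algebraType (coord_sets E U).

Lemma sigmaF_meas (d : nat) (dE : measure_display) (E : measurableType dE)
  (U : set (Zd d)) (A : set (Omega d E)) : sigmaF E U A -> measurable A.
Proof.
move=> h; apply: (smallest_sub (sigma_algebra_measurable (Omega d E)) _ h).
move=> B [i Ui HB]; apply: sub_gen_smallest; exists i => //.
Qed.

Lemma Osub_meas (d : nat) (dE : measure_display) (E : measurableType dE)
  (U : set (Zd d)) (A : set (Osub d E U)) : measurable A -> sigmaF E U A.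
Proof. by []. Qed.

Lemma Osub_fun (d : nat) (dE : measure_display) (E : measurableType dE)
  dY (Y : measurableType dY) (U : set (Zd d)) (h : Omega d E -> Y) :
  measurable_fun setT (h : Osub d E U -> Y) -> measurable_fun setT h.
Proof.
move=> mh _ B mB; apply: (@sigmaF_meas _ _ _ U); exact: mh.
Qed.

Lemma spec_mlsub (d : nat) (dE : measure_display) (E : measurableType dE)
    (R : realType)
    (gamma : set (Zd d) -> Omega d E -> probability (Omega d E) R) :
  specification gamma -> forall Lam, finite_set Lam ->
  forall A : set (Omega d E), measurable A ->
  measurable_fun setT ((fun w => gamma Lam w A) : Osub d E (~` Lam) -> \bar R).
Proof.
move=> sp Lam fL A mA _ B mB; rewrite setTI.
by have [h1 _] := sp Lam fL; exact: h1.
Qed.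

Lemma spec_ml (d : nat) (dE : measure_display) (E : measurableType dE)
    (R : realType)
    (gamma : set (Zd d) -> Omega d E -> probability (Omega d E) R) :
  specification gamma -> forall Lam, finite_set Lam ->
  forall A : set (Omega d E), measurable A ->
  measurable_fun setT (fun w => gamma Lam w A).
Proof.
move=> sp Lam fL A mA; apply: (@Osub_fun _ _ _ _ _ (~` Lam)).
exact: spec_mlsub.
Qed.

Lemma kapp_msub (d : nat) (dE : measure_display) (E : measurableType dE)
    (R : realType)
    (gamma : set (Zd d) -> Omega d E -> probability (Omega d E) R) :
  specification gamma -> forall Lam, finite_set Lam ->
  forall f : Omega d E -> R, measurable_fun setT f ->
  (exists M : R, forall x, `|f x| <= M) ->
  measurable_fun setT (kapp (gamma Lam) f : Osub d E (~` Lam) -> R).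
Proof.
move=> sp Lam fL f mf bf.
apply: (@meas_kapp _ _ (Osub d E (~` Lam)) (Omega d E) R (gamma Lam)) => //.
exact: spec_mlsub.
Qed.

Lemma kapp_bnd (d : nat) (dE : measure_display) (E : measurableType dE)
    (R : realType)
    (gamma : set (Zd d) -> Omega d E -> probability (Omega d E) R) Lam
  (f : Omega d E -> R) : measurable_fun setT f ->
  (exists M : R, forall x, `|f x| <= M) ->
  (exists M : R, forall x, `|kapp (gamma Lam) f x| <= M).
Proof. by move=> mf [M hM]; exists M => x; apply: bnd_kapp. Qed.

Lemma prop_kapp (d : nat) (dE : measure_display) (E : measurableType dE)
    (R : realType)
    (gamma : set (Zd d) -> Omega d E -> probability (Omega d E) R) :
  specification gamma -> forall Lam, finite_set Lam ->
  forall f h : Omega d E -> R, measurable_fun setT f ->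
  (exists M : R, forall x, `|f x| <= M) ->
  measurable_fun setT (h : Osub d E (~` Lam) -> R) ->
  forall w, kapp (gamma Lam) (fun x => f x * h x) w = h w * kapp (gamma Lam) f w.
Proof.
move=> sp Lam fL f h mf bf mh w.
rewrite /kapp -RintegralZl //; last exact: bnd_int.
rewrite /Rintegral; congr fine.
have mhO : measurable_fun setT h by exact: (@Osub_fun _ _ _ _ _ (~` Lam)).
apply: ae_eq_integral => //.
- by apply/measurable_EFinP; apply: measurable_funM.
- by apply/measurable_EFinP; apply: measurable_funM.
set S := h @^-1` [set h w].
have SF : sigmaF E (~` Lam) S.
  have := mh measurableT [set h w] (measurable_set1 _); rewrite setTI; exact.
have SCF : sigmaF E (~` Lam) (~` S).
  exact: (@measurableC _ (Osub d E (~` Lam)) S SF).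
exists (~` S); split.
- exact: (@sigmaF_meas _ _ _ (~` Lam)).
- have [_ [h2 _]] := sp Lam fL.
  have := h2 _ SCF w; move=> /= ->.
  by rewrite indicE memNset //= => /(_ erefl).
- move=> x /= Hx Sx; apply: Hx => _.
  by rewrite /S /= in Sx; rewrite Sx mulrC.
Qed.

Lemma cons_kapp_nn (d : nat) (dE : measure_display) (E : measurableType dE)
    (R : realType)
    (gamma : set (Zd d) -> Omega d E -> probability (Omega d E) R) :
  specification gamma -> forall Lam Delta, finite_set Lam -> finite_set Delta ->
  Lam `<=` Delta ->
  forall f : Omega d E -> R, measurable_fun setT f ->
  (exists M : R, forall x, `|f x| <= M) -> (forall x, 0 <= f x) ->
  forall w, kapp (gamma Delta) (kapp (gamma Lam) f) w = kapp (gamma Delta) f w.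
Proof.
move=> sp Lam Delta fL fD LD f mf bf f0 w.
rewrite /kapp /Rintegral; congr fine.
under eq_integral => x _.
  rewrite fineK; last first.
    by apply: integrable_fin_num => //; apply: bnd_int.
  over.
rewrite /=.
symmetry; apply: (@integral_mix _ _ _ _ _ _ _ (gamma Lam)).
- exact: spec_ml.
- by move=> A mA; have [_ [_ h3]] := sp Lam fL; apply: h3.
- by move=> z; rewrite lee_fin.
- exact/measurable_EFinP.
Qed.

Lemma cons_kapp (d : nat) (dE : measure_display) (E : measurableType dE)
    (R : realType)
    (gamma : set (Zd d) -> Omega d E -> probability (Omega d E) R) :
  specification gamma -> forall Lam Delta, finite_set Lam -> finite_set Delta ->
  Lam `<=` Delta ->
  forall f : Omega d E -> R, measurable_fun setT f ->
  (exists M : R, forall x, `|f x| <= M) ->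
  forall w, kapp (gamma Delta) (kapp (gamma Lam) f) w = kapp (gamma Delta) f w.
Proof.
move=> sp Lam Delta fL fD LD f mf [M hM] w.
pose g := fun x => f x + M.
have mg : measurable_fun setT g by apply: measurable_funD.
have bg : exists M0 : R, forall x, `|g x| <= M0.
  by exists (M + `|M|) => x; rewrite (le_trans (ler_normD _ _)) // lerD.
have g0 : forall x, 0 <= g x.
  move=> y; rewrite /g -lerBlDr sub0r.
  by rewrite lerNl (le_trans _ (hM y)) // -normrN ler_norm.
have sh : forall Lam', kapp (gamma Lam') f = fun x => kapp (gamma Lam') g x - M.
  move=> Lam'; apply/funext => x; rewrite /kapp /g kapp_shift //.
    by rewrite addrK.
  by exists M.
rewrite !sh.
have := @kapp_shift _ _ _ (gamma Delta w) (kapp (gamma Lam) g) (- M).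
rewrite /kapp => ->; last 2 first.
- by apply: meas_kapp => //; exact: spec_ml.
- exact: kapp_bnd.
by have := (@cons_kapp_nn _ _ _ _ _ sp _ _ fL fD LD _ mg bg g0 w); rewrite /kapp => ->.
Qed.


Lemma bnd_mul (T : Type) (R : realType) (f g : T -> R) :
  (exists M : R, forall x, `|f x| <= M) -> (exists M : R, forall x, `|g x| <= M) ->
  (exists M : R, forall x, `|f x * g x| <= M).
Proof.
move=> [M hM] [N hN]; exists (M * N) => x; rewrite normrM.
by apply: ler_pM => //.
Qed.

Lemma key (d : nat) (dE : measure_display) (E : measurableType dE)
    (R : realType)
    (gamma : set (Zd d) -> Omega d E -> probability (Omega d E) R) :
  specification gamma -> forall Lam Gam Delta, finite_set Lam -> finite_set Gam ->
  finite_set Delta -> Lam `<=` Delta ->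
  forall f g : Omega d E -> R,
    measurable_fun setT f -> (exists M : R, forall x, `|f x| <= M) ->
    measurable_fun setT g -> (exists M : R, forall x, `|g x| <= M) ->
  kapp (gamma Delta) (fun w => f w * kapp (gamma Lam) (kapp (gamma Gam) g) w)
  = kapp (gamma Delta) (fun w => kapp (gamma Lam) f w * kapp (gamma Gam) g w).
Proof.
move=> sp Lam Gam Delta fL fG fD LD f g mf bf mg bg.
set b := kapp (gamma Gam) g.
set a := kapp (gamma Lam) f.
set c := kapp (gamma Lam) b.
have mb : measurable_fun setT b by apply: meas_kapp => //; exact: spec_ml.
have bb := @kapp_bnd _ _ _ _ gamma Gam g mg bg.
have ma : measurable_fun setT a by apply: meas_kapp => //; exact: spec_ml.
have ba := @kapp_bnd _ _ _ _ gamma Lam f mf bf.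
have mc : measurable_fun setT c by apply: meas_kapp => //; exact: spec_ml.
have bc := @kapp_bnd _ _ _ _ gamma Lam b mb bb.
apply/funext => w.
rewrite -(@cons_kapp _ _ _ _ _ sp _ _ fL fD LD); last 2 first.
- exact: measurable_funM.
- exact: bnd_mul.
rewrite -(@cons_kapp _ _ _ _ _ sp _ _ fL fD LD (fun x => a x * b x)); last 2 first.
- exact: measurable_funM.
- exact: bnd_mul.
have -> : kapp (gamma Lam) (fun w => f w * c w) =
          (fun w => c w * a w).
  apply/funext => x; apply: (@prop_kapp _ _ _ _ _ sp _ fL _ _ mf bf).
  exact: kapp_msub.
have -> : kapp (gamma Lam) (fun w => a w * b w) =
          (fun w => a w * c w).
  apply/funext => x.
  have -> : (fun w => a w * b w) = (fun w => b w * a w).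
    by apply/funext => y; rewrite mulrC.
  apply: (@prop_kapp _ _ _ _ _ sp _ fL _ _ mb bb).
  exact: kapp_msub.
by congr kapp; apply/funext => y; rewrite mulrC.
Qed.

Theorem lemma6p2 (d : nat) (dE : measure_display) (E : measurableType dE)
    (R : realType)
    (gamma : set (Zd d) -> Omega d E -> probability (Omega d E) R) :
  specification gamma ->
  forall (Lam Gam : set (Zd d)),
    finite_set Lam -> finite_set Gam -> Gam `<=` ~` Lam ->
  forall (f g : Omega d E -> R),
    measurable_fun setT f -> (exists M : R, forall x, `|f x| <= M) ->
    measurable_fun setT g -> (exists M : R, forall x, `|g x| <= M) ->
  kapp (gamma (Lam `|` Gam))
       (fun w => f w * kapp (gamma Lam) (kapp (gamma Gam) g) w)
  = kapp (gamma (Lam `|` Gam))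
       (fun w => g w * kapp (gamma Gam) (kapp (gamma Lam) f) w).
Proof.
move=> sp Lam Gam fL fG GL f g mf bf mg bg.
have fD : finite_set (Lam `|` Gam) by rewrite finite_setU; split.
rewrite (@key _ _ _ _ _ sp _ _ _ fL fG fD (@subsetUl _ Lam Gam) _ _ mf bf mg bg).
rewrite (@key _ _ _ _ _ sp _ _ _ fG fL fD (@subsetUr _ Lam Gam) _ _ mg bg mf bf).
by congr kapp; apply/funext => w; rewrite mulrC.
Qed.
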